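(* Let $\mathbb{K}$ be a Hausdorff non-discrete topological field, let $E$ and $F$ be (Hausdorff) topological $\mathbb{K}$-vector spaces, $N$ a closed vector subspace of $E$, $E_1:=E/N$ and $q\colon E\to E_1$ the quotient map. Let $k\in\mathbb{N}_0\cup\{\infty\}$, let $f_1\colon U_1\to F$ be a map defined on an open subset $U_1\subseteq E_1$, and let $U\subseteq E$ be an open subset with $q(U)=U_1$. Then $f_1$ is of class $C^k$ if and only if $f:=f_1\circ q|_U\colon U\to F$ is of class $C^k$.
   Context: All topological vector spaces are Hausdorff; products carry the product topology. For open $V$ in a topological $\mathbb{K}$-vector space $X$, $V^{[1]}:=\{(x,v,t)\in V\times X\times\mathbb{K}:x+tv\in V\}$. A map $g\colon V\to Y$ into a topological $\mathbb{K}$-vector space is $C^0$ if continuous, and $C^1$ if continuous and there is a continuous $g^{[1]}\colon V^{[1]}\to Y$ with $g(x+tv)-g(x)=t\,g^{[1]}(x,v,t)$ for all $(x,v,t)\in V^{[1]}$; recursively $V^{[k+1]}=(V^{[k]})^{[1]}$, $g$ is $C^{k+1}$ if $C^k$ and $g^{[k]}$ is $C^1$, $g^{[k+1]}=(g^{[k]})^{[1]}$; $C^\infty$ = $C^k$ for all $k\in\mathbb{N}_0$. *)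

(* Defs.v *)
From HB Require Import structures.
From mathcomp Require Import all_boot all_order all_algebra.
From mathcomp Require Import all_classical all_reals topology pseudometric_normed_Zmodule.
Set Implicit Arguments. Unset Strict Implicit. Unset Printing Implicit Defensive.
Import Order.TTheory GRing.Theory.
Local Open Scope classical_set_scope.
Local Open Scope ring_scope.

(* topological space + K-vector space (no axioms): the ambient structure for
   the iterated spaces X^[k] *)
(* (a marker mixin, only needed because HB refuses two structures with the same
   mixins, and the library's own PreTopologicalLmodule requires a numDomainType) *)
HB.mixin Record isPreTvs (K : pzRingType) E & Topological E & GRing.Lmodule K E := {
  pretvs_marker : True
}.

#[short(type="preTvsType")]
HB.structure Definition PreTvs (K : pzRingType) :=
  {E of Topological E & GRing.Lmodule K E & isPreTvs K E}.

HB.mixin Record isTopField K & Topological K & GRing.Field K := {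
  tf_add : continuous (fun x : K * K => x.1 + x.2);
  tf_opp : continuous (fun x : K => - x);
  tf_mul : continuous (fun x : K * K => x.1 * x.2);
  tf_inv : forall x : K, x != 0 -> {for x, continuous (fun y : K => y^-1)};
  tf_hausdorff : hausdorff_space K;
  tf_nondiscrete : ~ (forall A : set K, open A)
}.

#[short(type="topFieldType")]
HB.structure Definition TopField :=
  {K of Topological K & GRing.Field K & isTopField K}.

HB.instance Definition _ (K : topFieldType) := Topological.copy K^o K.

HB.mixin Record PreTvs_isTvs (K : topFieldType) E & PreTvs K E := {
  tvs_add : continuous (fun x : E * E => x.1 + x.2);
  tvs_scale : continuous (fun x : K * E => x.1 *: x.2);
  tvs_hausdorff : hausdorff_space E
}.

#[short(type="tvsType")]
HB.structure Definition Tvs (K : topFieldType) :=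
  {E of PreTvs K E & PreTvs_isTvs K E}.

HB.instance Definition _ (K : topFieldType) := isPreTvs.Build K K^o I.
HB.instance Definition _ (K : pzRingType) (X Y : preTvsType K) :=
  isPreTvs.Build K (X * Y)%type I.

Section Ck.
Context {K : topFieldType}.

Definition sp1 (X : preTvsType K) : preTvsType K :=
  [the preTvsType K of (X * X * K^o)%type].

Definition bracket1 (X : preTvsType K) (V : set X) : set (sp1 X) :=
  [set p | V p.1.1 /\ V (p.1.1 + (p.2 : K) *: p.1.2)].

Definition diffquot (X : preTvsType K) (Y : tvsType K) (V : set X)
    (g : X -> Y) (g1 : sp1 X -> Y) : Prop :=
  {within bracket1 V, continuous g1} /\
  forall p : sp1 X, bracket1 V p ->
    g (p.1.1 + (p.2 : K) *: p.1.2) - g p.1.1 = (p.2 : K) *: g1 p.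

(* g : V -> Y (represented by a total function, only its values on V
   matter) is of class C^k. C^(k+1) <-> C^1 with g^[1] of class C^k, which
   unfolds to the existence of the chain g, g^[1], ..., g^[k]. *)
Fixpoint isCk (Y : tvsType K) (k : nat) :
    forall (X : preTvsType K), set X -> (X -> Y) -> Prop :=
  match k with
  | 0 => fun X V g => {within V, continuous g}
  | k'.+1 => fun X V g =>
      {within V, continuous g} /\
      exists g1 : sp1 X -> Y, diffquot V g g1 /\ @isCk Y k' (sp1 X) (bracket1 V) g1
  end.

(* k in N_0 \cup {oo}: None stands for oo *)
Definition isCk_ext (Y : tvsType K) (k : option nat) (X : preTvsType K)
    (V : set X) (g : X -> Y) : Prop :=
  match k with
  | Some n => isCk n V g
  | None => forall n, isCk n V g
  end.

End Ck.

(* Main.v *)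
Require Import Defs.
From HB Require Import structures.
From mathcomp Require Import all_boot all_order all_algebra.
From mathcomp Require Import all_classical all_reals topology.
Import Order.TTheory GRing.Theory.
Local Open Scope classical_set_scope.
Local Open Scope ring_scope.

Lemma contP {T U V : topologicalType} (f : T -> U) (g : T -> V) :
  continuous f -> continuous g -> continuous (fun x => (f x, g x)).
Proof.
move=> cf cg x.
exact: (@cvg_pair _ _ _ (nbhs x) (nbhs (f x)) (nbhs (g x)) _ _ _ f g (cf x) (cg x)).
Qed.

Lemma contC {T U V : topologicalType} (f : T -> U) (g : U -> V) :
  continuous f -> continuous g -> continuous (g \o f).
Proof. by move=> cf cg x; exact: (continuous_comp (cf x) (cg (f x))). Qed.

Lemma cont_fst {T U : topologicalType} : continuous (@fst T U).
Proof. move=> x; exact: cvg_fst. Qed.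
Lemma cont_snd {T U : topologicalType} : continuous (@snd T U).
Proof. move=> x; exact: cvg_snd. Qed.
Lemma cont_cst {T U : topologicalType} (c : U) : continuous (fun _ : T => c).
Proof. move=> x; exact: cvg_cst. Qed.

Lemma withinP (T U : topologicalType) (A : set T) (f : T -> U) : open A ->
  {within A, continuous f} = (forall x, A x -> {for x, continuous f}).
Proof.
move=> oA; rewrite continuous_open_subspace //; apply/propext; split.
  by move=> H x Ax; apply: H; rewrite inE.
by move=> H x; rewrite inE => /H.
Qed.

Definition prodmap {T U T' U' : Type} (f : T -> U) (g : T' -> U') :=
  fun p : T * T' => (f p.1, g p.2).

Lemma open_prodmap {T U T' U' : topologicalType} (f : T -> U) (g : T' -> U') :
  (forall A, open A -> open (f @` A)) -> (forall A, open A -> open (g @` A)) ->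
  forall A, open A -> open (prodmap f g @` A).
Proof.
move=> fo go A oA; rewrite openE => _ [p Ap <-].
have := oA; rewrite openE => /(_ p Ap) [[B C] /= [nB nC] BCA].
move: nB nC; rewrite !nbhsE => -[B' [oB' pB'] B'B] [C' [oC' pC'] C'C].
exists (f @` B', g @` C') => /=.
  split; [apply: open_nbhs_nbhs; split; [exact: fo|by exists p.1]|].
  by apply: open_nbhs_nbhs; split; [exact: go|by exists p.2].
move=> [a b] /= [[a' Ba' <-] [b' Cb' <-]].
exists (a', b') => //; apply: BCA; split; [exact: B'B|exact: C'C].
Qed.

Section K.
Context {K : topFieldType}.

Definition good (X : preTvsType K) :=
  continuous (fun p : sp1 X => p.1.1 + (p.2 : K) *: p.1.2).

Lemma c_x (X : preTvsType K) : continuous (fun p : sp1 X => p.1.1).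
Proof. move=> p. apply: cvg_comp; [exact: cvg_fst|exact: cvg_fst]. Qed.
Lemma c_v (X : preTvsType K) : continuous (fun p : sp1 X => p.1.2).
Proof. move=> p. apply: cvg_comp; [exact: cvg_fst|exact: cvg_snd]. Qed.
Lemma c_t (X : preTvsType K) : continuous (fun p : sp1 X => p.2 : K).
Proof. move=> p. exact: cvg_snd. Qed.


Lemma good_sp1 (X : preTvsType K) : good X -> good (sp1 X).
Proof.
move=> gX; rewrite /good.
match goal with |- continuous ?F => set G := F end.
have -> : G = (fun p : sp1 (sp1 X) =>
     (((p.1.1.1.1 + (p.2 : K) *: p.1.2.1.1, p.1.1.1.2 + (p.2 : K) *: p.1.2.1.2),
       ((p.1.1.2 : K) + (p.2 : K) * (p.1.2.2 : K)) : K^o) : sp1 X)).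
  by apply: funext => -[[[[a b] c] [[d e] f]] s].
pose x1 := fun p : sp1 (sp1 X) => p.1.1.
pose x2 := fun p : sp1 (sp1 X) => p.1.2.
pose x3 := fun p : sp1 (sp1 X) => p.2 : K.
pose y1 := fun p : sp1 X => p.1.1.
pose y2 := fun p : sp1 X => p.1.2.
pose y3 := fun p : sp1 X => p.2 : K.
have cx1 : continuous x1 by exact: c_x.
have cx2 : continuous x2 by exact: c_v.
have cx3 : continuous x3 by exact: c_t.
have cy1 : continuous y1 by exact: c_x.
have cy2 : continuous y2 by exact: c_v.
have cy3 : continuous y3 by exact: c_t.
apply: contP; [apply: contP|].
- pose h := fun p : sp1 (sp1 X) => ((p.1.1.1.1, p.1.2.1.1), p.2) : sp1 X.
  apply: (@contC _ _ _ h _ _ gX).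
  apply: contP; [apply: contP|exact: cx3].
  + exact: (@contC _ _ _ x1 y1 cx1 cy1).
  + exact: (@contC _ _ _ x2 y1 cx2 cy1).
- pose h := fun p : sp1 (sp1 X) => ((p.1.1.1.2, p.1.2.1.2), p.2) : sp1 X.
  apply: (@contC _ _ _ h _ _ gX).
  apply: contP; [apply: contP|exact: cx3].
  + exact: (@contC _ _ _ x1 y2 cx1 cy2).
  + exact: (@contC _ _ _ x2 y2 cx2 cy2).
- have H : continuous (fun p : sp1 (sp1 X) => (p.1.1.2:K) + (p.2:K) * (p.1.2.2:K)).
  apply: (@contC _ _ _ (fun p : sp1 (sp1 X) => ((p.1.1.2:K), (p.2:K) * (p.1.2.2:K))) (fun x : K * K => x.1 + x.2)); last exact: tf_add.
  apply: contP; first exact: (@contC _ _ _ x1 y3 cx1 cy3).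
  apply: (@contC _ _ _ (fun p : sp1 (sp1 X) => ((p.2:K), (p.1.2.2:K))) (fun x : K * K => x.1 * x.2)); last exact: tf_mul.
  apply: contP; first exact: cx3.
  exact: (@contC _ _ _ x2 y3 cx2 cy3).
  exact: H.
Qed.


Lemma good_tvs (E : tvsType K) : good E.
Proof.
rewrite /good.
apply: (@contC _ _ _ (fun p : sp1 E => (p.1.1, (p.2 : K) *: p.1.2)) (fun x : E * E => x.1 + x.2)); last exact: tvs_add.
apply: contP; first exact: c_x.
apply: (@contC _ _ _ (fun p : sp1 E => ((p.2 : K), p.1.2)) (fun x : K * E => x.1 *: x.2)); last exact: tvs_scale.
apply: contP; [exact: c_t|exact: c_v].
Qed.

Lemma open_bracket (X : preTvsType K) (V : set X) : good X -> open V -> open (bracket1 V).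
Proof.
move=> gX oV.
have -> : bracket1 V = (fun p : sp1 X => p.1.1) @^-1` V `&`
   (fun p : sp1 X => p.1.1 + (p.2 : K) *: p.1.2) @^-1` V by [].
apply: openI; [exact: (proj1 (continuousP _) (c_x X)) | exact: (proj1 (continuousP _) gX)].
Qed.

Definition Qm {X X1 : preTvsType K} (q : X -> X1) : sp1 X -> sp1 X1 :=
  fun p => ((q p.1.1, q p.1.2), p.2).

Definition lin {X X1 : preTvsType K} (q : X -> X1) :=
  forall x v (t : K), q (x + t *: v) = q x + t *: q v.

Lemma lin_Q (X X1 : preTvsType K) (q : X -> X1) : lin q -> lin (Qm q).
Proof.
move=> hq [[a b] c] [[d e] f] t.
by rewrite /Qm /= !hq.
Qed.

Lemma cont_Q (X X1 : preTvsType K) (q : X -> X1) : continuous q -> continuous (Qm q).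
Proof.
move=> cq; rewrite /Qm.
apply: contP; [apply: contP|exact: c_t].
- exact: (@contC _ _ _ (fun p : sp1 X => p.1.1) q (c_x X) cq).
- exact: (@contC _ _ _ (fun p : sp1 X => p.1.2) q (c_v X) cq).
Qed.

Lemma open_Q (X X1 : preTvsType K) (q : X -> X1) :
  (forall A, open A -> open (q @` A)) -> forall A, open A -> open (Qm q @` A).
Proof.
move=> qo A oA.
have idop : forall B : set K^o, open B -> open (id @` B) by move=> B; rewrite image_id.
have := @open_prodmap _ _ _ _ (prodmap q q) id (@open_prodmap _ _ _ _ q q qo qo) idop A oA.
exact.
Qed.

Lemma surj_Q (X X1 : preTvsType K) (q : X -> X1) :
  (forall y, exists x, q x = y) -> forall P : sp1 X1, exists p, Qm q p = P.
Proof.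
move=> qs [[a b] c]; have [x <-] := qs a; have [y <-] := qs b.
by exists ((x, y), c).
Qed.


Lemma image_Q (X X1 : preTvsType K) (q : X -> X1) (V : set X) (V1 : set X1) :
  lin q -> (forall y, exists x, q x = y) -> q @` V = V1 ->
  Qm q @` bracket1 V = bracket1 V1.
Proof.
move=> hq qs qV; apply/seteqP; split.
  move=> _ [[[x v] t] [/= Vx Vxtv] <-]; split => /=.
    by rewrite -qV; exists x.
  by rewrite -qV -hq; exists (x + t *: v).
move=> [[y w] t] [/= Vy Vywt].
rewrite -qV in Vy Vywt.
case: Vy => x Vx qx; case: Vywt => z Vz qz.
have [->|t0] := eqVneq t 0.
  have [v qv] := qs w.
  exists ((x, v), 0); last by rewrite /Qm /= qx qv.
  by split => //=; rewrite scale0r addr0.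
exists ((x, t^-1 *: (z - x)), t).
  split => //=; by rewrite scalerKV // addrC subrK.
rewrite /Qm /= qx; congr (_, _, _).
apply: (scalerI t0).
apply: (addrI y).
by rewrite -{1}qx -hq scalerKV // addrC subrK qz.
Qed.


Lemma cont_transfer (X X1 : preTvsType K) (Y : topologicalType) (q : X -> X1)
  (V : set X) (V1 : set X1) (g : X1 -> Y) (g' : X -> Y) :
  continuous q -> (forall A, open A -> open (q @` A)) -> open V -> q @` V = V1 ->
  (forall x, V x -> g' x = g (q x)) ->
  ({within V1, continuous g} <-> {within V, continuous g'}).
Proof.
move=> cq qo oV qV hg.
have oV1 : open V1 by rewrite -qV; exact: qo.
rewrite (withinP _ _ _ g' oV) (withinP _ _ _ g oV1); split.
  move=> cg x Vx.
  have nV : nbhs x V by apply: open_nbhs_nbhs; split.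
  have E : \forall z \near x, (g \o q) z = g' z.
    by apply: filterS nV => z Vz /=; rewrite hg.
  rewrite /continuous_at /prop_for (hg x Vx).
  apply: cvg_trans (near_eq_cvg E) _.
  apply: (continuous_comp (cq x)); apply: cg.
  by rewrite -qV; exists x.
move=> cg' y; rewrite -qV => -[x Vx <-].
move=> W Wn.
have nV : nbhs x V by apply: open_nbhs_nbhs; split.
have nW : nbhs x (g' @^-1` W).
  apply: (cg' x Vx); by rewrite hg.
have H : nbhs x (V `&` g' @^-1` W) by apply: filterI.
move: H; rewrite nbhsE => -[O [oO Ox] OVW].
have : nbhs (q x) (q @` O).
  by apply: open_nbhs_nbhs; split; [exact: qo|exists x].
apply: filterS => _ [o Oo <-] /=.
have [Vo Wo] := OVW o Oo.
by move: Wo; rewrite /= hg.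
Qed.


Lemma all_open_of_singleton : nbhs (0 : K) [set 0] -> forall B : set K, open B.
Proof.
move=> n0 B; rewrite openE => b Bb.
have ct : {for b, continuous (fun s : K => s + - b)}.
  apply: (@continuous_comp _ _ _ (fun s : K => (s, - b)) (fun x : K * K => x.1 + x.2)).
    apply: contP => //; [move=> ?; exact: cvg_id|exact: cont_cst].
  exact: tf_add.
have : nbhs b ((fun s : K => s + - b) @^-1` [set 0]).
  by apply: ct; rewrite /= subrr.
apply: filterS => s /= /eqP; rewrite subr_eq0 => /eqP ->; exact: Bb.
Qed.

Lemma K_proper : ProperFilter (within (fun s : K => s != 0) (nbhs (0 : K))).
Proof.
apply: Build_ProperFilter_ex.
move=> P; rewrite /within /= => nP.
apply: contrapT => nex.
apply: (@tf_nondiscrete K); apply: all_open_of_singleton.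
apply: filterS nP => s H; apply: contrapT => s0.
by apply: nex; exists s; apply: H; apply/eqP.
Qed.


Lemma c_phi (X : preTvsType K) (x v : X) :
  continuous (fun s : K => (((x, v), (s : K^o)) : sp1 X)).
Proof.
move=> s.
exact: (@cvg_pair _ _ _ (nbhs s) (nbhs (x,v)) (nbhs s) _ _ _ (fun=> (x,v)) id (cvg_cst _) (@cvg_id _ (nbhs s))).
Qed.

Lemma diffquot_nz (X X1 : preTvsType K) (Y : tvsType K) (q : X -> X1)
  (V : set X) (g : X1 -> Y) (g' : X -> Y) (g1 : sp1 X -> Y) :
  lin q -> (forall x, V x -> g' x = g (q x)) -> diffquot V g' g1 ->
  forall x v x' v' (t : K), t != 0 ->
  bracket1 V ((x, v), t) -> bracket1 V ((x', v'), t) -> q x = q x' -> q v = q v' ->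
  g1 ((x, v), t) = g1 ((x', v'), t).
Proof.
move=> hq hg [_ dq] x v x' v' t t0 b b' ex ev.
apply: (scalerI t0).
rewrite -(dq _ b) -(dq _ b') /=.
case: b => /= Vx Vxt; case: b' => /= Vx' Vxt'.
by rewrite !hg // !hq ex ev.
Qed.
Arguments diffquot_nz {X X1 Y q V g g' g1}.

Lemma wd (X X1 : preTvsType K) (Y : tvsType K) (q : X -> X1)
  (V : set X) (g : X1 -> Y) (g' : X -> Y) (g1 : sp1 X -> Y) :
  good X -> lin q -> open V -> (forall x, V x -> g' x = g (q x)) -> diffquot V g' g1 ->
  forall p p', bracket1 V p -> bracket1 V p' -> Qm q p = Qm q p' -> g1 p = g1 p'.
Proof.
move=> gX hq oV hg dq [[x v] t] [[x' v'] t'] b b' [ex ev et].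
subst t'.
have [t0|t0] := eqVneq t 0; last exact: (diffquot_nz hq hg dq x v x' v' t t0 b b' ex ev).
subst t.
have oB := open_bracket _ _ gX oV.
have cg1 : forall p, bracket1 V p -> {for p, continuous g1}.
  by rewrite -(withinP _ _ _ _ oB); case: dq.
pose phi := fun s : K => (((x, v), (s : K^o)) : sp1 X).
pose phi' := fun s : K => (((x', v'), (s : K^o)) : sp1 X).
pose G := within (fun s : K => s != 0) (nbhs (0 : K)).
have PG : ProperFilter G := K_proper.
have c1 : (g1 \o phi) @ G --> g1 (phi 0).
  apply: cvg_trans; last exact: (continuous_comp (c_phi _ x v 0) (cg1 _ b)).
  by apply: cvg_app; apply: cvg_within.
have c2 : (g1 \o phi') @ G --> g1 (phi' 0).
  apply: cvg_trans; last exact: (continuous_comp (c_phi _ x' v' 0) (cg1 _ b')).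
  by apply: cvg_app; apply: cvg_within.
have E : {near G, g1 \o phi =1 g1 \o phi'}.
  have n1 : nbhs (0 : K) (phi @^-1` bracket1 V).
    apply: (c_phi _ x v 0); apply: open_nbhs_nbhs; split => //.
  have n2 : nbhs (0 : K) (phi' @^-1` bracket1 V).
    apply: (c_phi _ x' v' 0); apply: open_nbhs_nbhs; split => //.
  rewrite /G near_withinE.
  have n12 : nbhs (0 : K) (phi @^-1` bracket1 V `&` phi' @^-1` bracket1 V) by apply: filterI.
  apply: filterS n12 => s [/= bs bs'] s0.
  exact: (diffquot_nz hq hg dq x v x' v' s s0 bs bs' ex ev).
have c2' : (g1 \o phi') @ G --> g1 (phi 0).
  exact: cvg_trans (near_eq_cvg E) c1.
exact: (@cvg_unique _ (@tvs_hausdorff K Y) ((g1 \o phi') @ G) _ _ _ c2' c2).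
Qed.


Arguments cont_transfer {X X1 Y q V V1 g g'}.
Arguments image_Q {X X1 q V V1}.
Arguments lin_Q {X X1 q}.
Arguments surj_Q {X X1 q}.
Arguments cont_Q {X X1 q}.
Arguments open_Q {X X1 q}.
Arguments good_sp1 {X}.
Arguments wd {X X1 Y q V g g' g1}.

Lemma isCk_cont (Y : tvsType K) n (X : preTvsType K) (V : set X) (g : X -> Y) :
  isCk n V g -> {within V, continuous g}.
Proof. by case: n => [|n] //= [] . Qed.
Arguments isCk_cont {Y n X V g}.

Lemma main (Y : tvsType K) (n : nat) : forall (X X1 : preTvsType K) (q : X -> X1)
  (V : set X) (V1 : set X1) (g : X1 -> Y) (g' : X -> Y),
  good X -> lin q -> (forall y, exists x, q x = y) -> continuous q ->
  (forall A, open A -> open (q @` A)) -> open V -> q @` V = V1 ->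
  (forall x, V x -> g' x = g (q x)) ->
  (isCk n V1 g <-> isCk n V g').
Proof.
elim: n => [|n IH] X X1 q V V1 g g' gX hq qs cq qo oV qV hg.
  exact: (cont_transfer cq qo oV qV hg).
have hQ := lin_Q hq.
have sQ := surj_Q qs.
have cQ := cont_Q cq.
have oQ := open_Q qo.
have oB := open_bracket _ _ gX oV.
have iQ := image_Q hq qs qV.
have gX1 := good_sp1 gX.
have CT := cont_transfer cq qo oV qV hg.
split.
- move=> [cg [g1 [[_ dq] ck]]]; split; first exact: CT.1.
  have ck' : isCk n (bracket1 V) (g1 \o Qm q).
    exact: (proj1 (IH _ _ (Qm q) _ _ g1 (g1 \o Qm q) gX1 hQ sQ cQ oQ oB iQ (fun _ _ => erefl)) ck).
  exists (g1 \o Qm q); split => //; split; first exact: isCk_cont ck'.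
  move=> [[x v] t] [/= Vx Vxt].
  rewrite !hg // hq; apply: (dq ((q x, q v), t)).
  split => /=; rewrite -qV; first by exists x.
  by exists (x + t *: v) => //; rewrite hq.
- move=> [cg' [g1' [[_ dq'] ck']]]; split; first exact: CT.2.
  pose G1 : sp1 X1 -> Y := fun P =>
    match pselect (exists p, bracket1 V p /\ Qm q p = P) with
    | left h => g1' (projT1 (cid h))
    | right _ => 0
    end.
  have hG : forall p, bracket1 V p -> g1' p = G1 (Qm q p).
    move=> p Bp; rewrite /G1; case: pselect => [h|nh]; last first.
      by exfalso; apply: nh; exists p.
    case: (cid h) => p0 /= [Bp0 e].
    exact: (wd gX hq oV hg (conj (isCk_cont ck') dq') _ _ Bp Bp0 (esym e)).
  have ck1 : isCk n (bracket1 V1) G1.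
    exact: (proj2 (IH _ _ (Qm q) _ _ G1 g1' gX1 hQ sQ cQ oQ oB iQ hG) ck').
  exists G1; split => //; split; first exact: isCk_cont ck1.
  move=> P; rewrite -iQ => -[[[x v] t] Bp <-].
  rewrite -hG // -dq' //.
  case: Bp => /= Vx Vxt.
  by rewrite !hg // hq.
Qed.

End K.

(* E1 = E/N is represented by an arbitrary (Hausdorff) topological K-vector
   space E1 together with the quotient map q : E -> E1, i.e. a continuous, open,
   surjective linear map with kernel N.
   k : option nat, with None standing for k = oo. *)
Theorem lemma10p4 (K : topFieldType) (E F E1 : tvsType K)
  (N : set E)
  (hN0 : N 0)
  (hNadd : forall x y, N x -> N y -> N (x + y))
  (hNscale : forall (a : K) x, N x -> N (a *: x))
  (hNclosed : closed N)
  (q : {linear E -> E1})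
  (hqker : forall x, q x = 0 <-> N x)
  (hqsurj : forall y : E1, exists x : E, q x = y)
  (hqcont : continuous q)
  (hqopen : forall A : set E, open A -> open (q @` A))
  (k : option nat)
  (U1 : set E1) (hU1 : open U1) (f1 : E1 -> F)
  (U : set E) (hU : open U) (hqU : q @` U = U1) :
  isCk_ext k U1 f1 <-> isCk_ext k U (f1 \o q).
Proof.
have hq : lin (q : E -> E1) by move=> x v t; rewrite linearD linearZ.
have M := fun n => @main K F n E E1 q U U1 f1 (f1 \o q) (good_tvs E) hq hqsurj
  hqcont hqopen hU hqU (fun _ _ => erefl).
case: k => [n|] /=; first exact: M.
by split => H n; apply/(M n).
Qed.
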